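(* The parallel reduction $\Rightarrow$ on $PPC_{EM}$ terms has the diamond property: for all terms $t,t_1,t_2$, if $t\Rightarrow t_1$ and $t\Rightarrow t_2$, then there exists a term $t_3$ with $t_1\Rightarrow t_3$ and $t_2\Rightarrow t_3$.
   Context: **Terms of $PPC_{EM}$.** Names $x,y,\dots$; $\theta$ ranges over finite lists of names. Terms: $$t ::= x \mid \hat{x} \mid t\,t \mid t\bullet t \mid [\theta]\,p\to b \mid b\langle\theta\vdash\mu\mid\Delta\rangle.$$ Here $x$ is a variable occurrence and $\hat x$ a matchable occurrence of a name. In a matching $b\langle\theta\vdash\mu\mid\Delta\rangle$, $\mu$ is a decided match, i.e. either $\bot$ or a substitution (a finite map from names to terms), and $\Delta$ is a finite multiset of pairs of terms. The notation $(a,p)\Delta$ is the multiset union of $\Delta$ with $\{(a,p)\}$. As a term, $\bot$ denotes a fixed closed normal term without $\bullet$ or matchings. **Binding and free names.** In $[\theta]p\to b$, $\theta$ binds matchables $\hat x$ ($x\in\theta$) in $p$ and variables $x\in\theta$ in $b$. In $b\langle\theta\vdash\mu\mid\Delta\rangle$, $\theta$ binds variables of $b$ and matchables in the second components of the pairs of $\Delta$. $\mathrm{fn}(a)$ is the set of free names of $a$. Terms are taken modulo $\alpha$-conversion, with all bound names distinct and disjoint from free names. **Substitution.** $t^\sigma$ is capture-avoiding replacement of free variables $x\in\mathrm{dom}(\sigma)$ by $\sigma(x)$, propagating into $\mathrm{codom}\,\mu$ and into $\Delta$. **Disjoint union $\uplus$ of decided matches.** It is commutative; $\bot\uplus\mu=\bot$;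 $\sigma_1\uplus\sigma_2=\bot$ if the domains overlap, and otherwise it is their union. **Failure pairs.** Call $(a,p)$ a *failure pair* (relative to $\theta$) if it is one of: - $(\hat y,\hat x)$ with $x\notin\theta$ and $x\ne y$; - $(a_1\bullet a_2,\hat x)$ with $x\notin\theta$; - $([\theta_a]p_a\to b_a,\hat x)$ with $x\notin\theta$; - $(\hat x,p_1\bullet p_2)$; - $([\theta_a]p_a\to b_a,p_1\bullet p_2)$; - $(a,[\theta_p]p_p\to b_p)$. **Parallel reduction $\Rightarrow$.** It is defined inductively on terms. It is extended to decided matches by $\bot\Rightarrow\bot$ and $\sigma\Rightarrow\sigma'$ iff $\mathrm{dom}\,\sigma=\mathrm{dom}\,\sigma'$ and $\sigma(x)\Rightarrow\sigma'(x)$ for all $x$. It is extended to multisets of pairs elementwise, componentwise. The rules are: - (Id) $t\Rightarrow t$. - (Cgr) If $t_1\Rightarrow t_1'$ and $t_2\Rightarrow t_2'$, then $t_1t_2\Rightarrow t_1't_2'$ and $t_1\bullet t_2\Rightarrow t_1'\bullet t_2'$. - (Cgr) If $p\Rightarrow p'$ and $b\Rightarrow b'$, then $[\theta]p\to b\Rightarrow[\theta]p'\to b'$. - (Cgr) If $b\Rightarrow b'$, $\mu\Rightarrow\mu'$ and $\Delta\Rightarrow\Delta'$, then $b\langle\theta\vdash\mu\mid\Delta\rangle\Rightarrow b'\langle\theta\vdash\mu'\mid\Delta'\rangle$. - (Init) If $p\Rightarrow p'$, $b\Rightarrow b'$ and $a\Rightarrow a'$, then $([\theta]p\to b)a\Rightarrow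 b'\langle\theta\vdash\emptyset\mid(a',p')\rangle$. - (Struct) If $t\Rightarrow t'$, then $\hat x\,t\Rightarrow\hat x\bullet t'$. - (Struct) If $t_i\Rightarrow t_i'$ for $i=1,2,3$, then $(t_1\bullet t_2)t_3\Rightarrow(t_1'\bullet t_2')\bullet t_3'$. - (Match) If $b\Rightarrow b'$, $\mu\Rightarrow\mu'$, $a\Rightarrow a'$ and $\Delta\Rightarrow\Delta'$, with $x\in\theta$ and $\mathrm{fn}(a)\cap\theta=\emptyset$, then $b\langle\theta\vdash\mu\mid(a,\hat x)\Delta\rangle\Rightarrow b'\langle\theta\vdash\mu'\uplus\{x\mapsto a'\}\mid\Delta'\rangle$. - (Match) If $b\Rightarrow b'$, $\mu\Rightarrow\mu'$ and $\Delta\Rightarrow\Delta'$, with $x\notin\theta$, then $b\langle\theta\vdash\mu\mid(\hat x,\hat x)\Delta\rangle\Rightarrow b'\langle\theta\vdash\mu'\mid\Delta'\rangle$. - (Match) If $b\Rightarrow b'$, $\mu\Rightarrow\mu'$, $\Delta\Rightarrow\Delta'$, $a_i\Rightarrow a_i'$ and $p_i\Rightarrow p_i'$, then $b\langle\theta\vdash\mu\mid(a_1\bullet a_2,p_1\bullet p_2)\Delta\rangle\Rightarrow b'\langle\theta\vdash\mu'\mid(a_1',p_1')(a_2',p_2')\Delta'\rangle$. - (Match) If $b\Rightarrow b'$ and $\Delta\Rightarrow\Delta'$, with $(a,p)$ a failure pair, then $b\langle\theta\vdash\mu\mid(a,p)\Delta\rangle\Rightarrow b'\langle\theta\vdash\bot\mid\Delta'\rangle$.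 - (Res) If $b\Rightarrow b'$ and $\sigma\Rightarrow\sigma'$, with $\mathrm{dom}\,\sigma=\theta$, then $b\langle\theta\vdash\sigma\mid\emptyset\rangle\Rightarrow(b')^{\sigma'}$. - (Res) If $\mathrm{dom}\,\sigma\ne\theta$, then $b\langle\theta\vdash\sigma\mid\emptyset\rangle\Rightarrow\bot$. - (Res) $b\langle\theta\vdash\bot\mid\Delta\rangle\Rightarrow\bot$. *)

(* Defs.v *)
From Stdlib Require Import List Arith PeanoNat.
Import ListNotations.

(* Two independent de Bruijn index spaces: one for variable occurrences
   (x) and one for matchable occurrences (x^).  A binder theta of length k
   binds k names; in  [theta] p -> b  it binds matchables 0..k-1 of p and
   variables 0..k-1 of b; in  b<theta |- mu | Delta>  it binds variables
   0..k-1 of b and matchables 0..k-1 of the second components of Delta.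
   Decided matches: None = bottom; Some s = the substitution whose
   domain is {x | nth x s = Some _} (keys refer to the names of theta
   when < k).  Multisets of pairs are lists; rules act on an element at
   any position. *)

Inductive term : Type :=
| Var : nat -> term
| Mat : nat -> term
| App : term -> term -> term
| Dat : term -> term -> term
| Abs : nat -> term -> term -> term           (* [theta] p -> b, |theta| = k *)
| Mtc : term -> nat -> option (list (option term)) -> list (term * term) -> term.
                                              (* b <theta |- mu | Delta> *)

Definition dmatch := option (list (option term)).

(* the fixed closed normal term  [x] x^ -> x  used for bottom *)
Definition botT : term := Abs 1 (Mat 0) (Var 0).

Definition up (k : nat) (f : nat -> nat) (i : nat) : nat :=
  if i <? k then i else k + f (i - k).

Fixpoint ren (rv rm : nat -> nat) (t : term) : term :=
  match t with
  | Var i => Var (rv i)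
  | Mat i => Mat (rm i)
  | App t1 t2 => App (ren rv rm t1) (ren rv rm t2)
  | Dat t1 t2 => Dat (ren rv rm t1) (ren rv rm t2)
  | Abs k p b => Abs k (ren rv (up k rm) p) (ren (up k rv) rm b)
  | Mtc b k mu D =>
      Mtc (ren (up k rv) rm b) k
          (option_map (map (option_map (ren rv rm))) mu)
          (map (fun ap => (ren rv rm (fst ap), ren rv (up k rm) (snd ap))) D)
  end.

Definition upv (k : nat) (sv : nat -> term) (i : nat) : term :=
  if i <? k then Var i else ren (fun j => k + j) (fun j => j) (sv (i - k)).

Definition upm (k : nat) (sv : nat -> term) (i : nat) : term :=
  ren (fun j => j) (fun j => k + j) (sv i).

Fixpoint subst (sv : nat -> term) (t : term) : term :=
  match t with
  | Var i => sv i
  | Mat i => Mat i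
  | App t1 t2 => App (subst sv t1) (subst sv t2)
  | Dat t1 t2 => Dat (subst sv t1) (subst sv t2)
  | Abs k p b => Abs k (subst (upm k sv) p) (subst (upv k sv) b)
  | Mtc b k mu D =>
      Mtc (subst (upv k sv) b) k
          (option_map (map (option_map (subst sv))) mu)
          (map (fun ap => (subst sv (fst ap), subst (upm k sv) (snd ap))) D)
  end.

(* b^sigma where b lives under the binder theta (|theta| = k), dom sigma = theta *)
Definition inst (k : nat) (s : list (option term)) (b : term) : term :=
  subst (fun i => if i <? k then
                    match nth_error s i with Some (Some t) => t | _ => botT end
                  else Var (i - k)) b.

Definition dom_is (k : nat) (s : list (option term)) : Prop :=
  forall i, nth i s None <> None <-> i < k.

Fixpoint merge (l1 l2 : list (option term)) : option (list (option term)) :=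
  match l1, l2 with
  | [], l => Some l
  | l, [] => Some l
  | o1 :: r1, o2 :: r2 =>
      match o1, o2 with
      | Some _, Some _ => None
      | Some _, None => option_map (cons o1) (merge r1 r2)
      | None, _ => option_map (cons o2) (merge r1 r2)
      end
  end.

Definition dunion (m1 m2 : dmatch) : dmatch :=
  match m1, m2 with
  | Some l1, Some l2 => merge l1 l2
  | _, _ => None
  end.

Definition single (x : nat) (a : term) : list (option term) :=
  repeat None x ++ [Some a].

Inductive failure (k : nat) : term -> term -> Prop :=
| fail_mm : forall y x, k <= x -> x - k <> y -> failure k (Mat y) (Mat x)
| fail_dm : forall a1 a2 x, k <= x -> failure k (Dat a1 a2) (Mat x)
| fail_am : forall j pa ba x, k <= x -> failure k (Abs j pa ba) (Mat x)
| fail_md : forall x p1 p2, failure k (Mat x) (Dat p1 p2)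
| fail_ad : forall j pa ba p1 p2, failure k (Abs j pa ba) (Dat p1 p2)
| fail_xa : forall a j pp bp, failure k a (Abs j pp bp).

Inductive pr : term -> term -> Prop :=
| pr_id : forall t, pr t t
| pr_app : forall t1 t1' t2 t2', pr t1 t1' -> pr t2 t2' -> pr (App t1 t2) (App t1' t2')
| pr_dat : forall t1 t1' t2 t2', pr t1 t1' -> pr t2 t2' -> pr (Dat t1 t2) (Dat t1' t2')
| pr_abs : forall k p p' b b', pr p p' -> pr b b' -> pr (Abs k p b) (Abs k p' b')
| pr_mtc : forall b b' k mu mu' D D',
    pr b b' -> pr_dm mu mu' -> pr_D D D' -> pr (Mtc b k mu D) (Mtc b' k mu' D')
| pr_init : forall k p p' b b' a a',
    pr p p' -> pr b b' -> pr a a' ->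
    pr (App (Abs k p b) a) (Mtc b' k (Some []) [(a', p')])
| pr_struct_m : forall x t t', pr t t' -> pr (App (Mat x) t) (Dat (Mat x) t')
| pr_struct_d : forall t1 t1' t2 t2' t3 t3',
    pr t1 t1' -> pr t2 t2' -> pr t3 t3' ->
    pr (App (Dat t1 t2) t3) (Dat (Dat t1' t2') t3')
| pr_match_bind : forall b b' k mu mu' a a' x Dl Dl' Dr Dr',
    x < k ->
    pr b b' -> pr_dm mu mu' -> pr a a' -> pr_D Dl Dl' -> pr_D Dr Dr' ->
    pr (Mtc b k mu (Dl ++ (a, Mat x) :: Dr))
       (Mtc b' k (dunion mu' (Some (single x a'))) (Dl' ++ Dr'))
| pr_match_same : forall b b' k mu mu' x y Dl Dl' Dr Dr',
    k <= x -> x - k = y ->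
    pr b b' -> pr_dm mu mu' -> pr_D Dl Dl' -> pr_D Dr Dr' ->
    pr (Mtc b k mu (Dl ++ (Mat y, Mat x) :: Dr)) (Mtc b' k mu' (Dl' ++ Dr'))
| pr_match_dat : forall b b' k mu mu' a1 a1' a2 a2' p1 p1' p2 p2' Dl Dl' Dr Dr',
    pr b b' -> pr_dm mu mu' -> pr_D Dl Dl' -> pr_D Dr Dr' ->
    pr a1 a1' -> pr a2 a2' -> pr p1 p1' -> pr p2 p2' ->
    pr (Mtc b k mu (Dl ++ (Dat a1 a2, Dat p1 p2) :: Dr))
       (Mtc b' k mu' (Dl' ++ (a1', p1') :: (a2', p2') :: Dr'))
| pr_match_fail : forall b b' k mu a p Dl Dl' Dr Dr',
    failure k a p -> pr b b' -> pr_D Dl Dl' -> pr_D Dr Dr' ->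
    pr (Mtc b k mu (Dl ++ (a, p) :: Dr)) (Mtc b' k None (Dl' ++ Dr'))
| pr_res : forall b b' k s s',
    dom_is k s -> pr b b' -> pr_os s s' ->
    pr (Mtc b k (Some s) []) (inst k s' b')
| pr_res_dom : forall b k s,
    ~ dom_is k s -> pr (Mtc b k (Some s) []) botT
| pr_res_bot : forall b k D, pr (Mtc b k None D) botT
with pr_dm : dmatch -> dmatch -> Prop :=
| prdm_bot : pr_dm None None
| prdm_some : forall s s', pr_os s s' -> pr_dm (Some s) (Some s')
with pr_os : list (option term) -> list (option term) -> Prop :=
| pros_nil : pr_os [] []
| pros_none : forall s s', pr_os s s' -> pr_os (None :: s) (None :: s')
| pros_some : forall t t' s s', pr t t' -> pr_os s s' -> pr_os (Some t :: s) (Some t' :: s')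
with pr_D : list (term * term) -> list (term * term) -> Prop :=
| prD_nil : pr_D [] []
| prD_cons : forall a a' p p' D D',
    pr a a' -> pr p p' -> pr_D D D' -> pr_D ((a, p) :: D) ((a', p') :: D').

(* Main.v *)
Require Import Defs.
From Stdlib Require Import List Arith PeanoNat Lia.
Import ListNotations.

Section TI.
Variable P : term -> Prop.
Hypothesis HVar : forall i, P (Var i).
Hypothesis HMat : forall i, P (Mat i).
Hypothesis HApp : forall t1 t2, P t1 -> P t2 -> P (App t1 t2).
Hypothesis HDat : forall t1 t2, P t1 -> P t2 -> P (Dat t1 t2).
Hypothesis HAbs : forall k p b, P p -> P b -> P (Abs k p b).
Hypothesis HMtc : forall b k mu D, P b ->
  (forall s t, mu = Some s -> In (Some t) s -> P t) ->
  (forall a p, In (a, p) D -> P a /\ P p) -> P (Mtc b k mu D).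

Fixpoint term_ind' (t : term) : P t :=
  match t with
  | Var i => HVar i
  | Mat i => HMat i
  | App t1 t2 => HApp t1 t2 (term_ind' t1) (term_ind' t2)
  | Dat t1 t2 => HDat t1 t2 (term_ind' t1) (term_ind' t2)
  | Abs k p b => HAbs k p b (term_ind' p) (term_ind' b)
  | Mtc b k mu D => HMtc b k mu D (term_ind' b)
      (match mu as m return (forall s t, m = Some s -> In (Some t) s -> P t) with
       | None => fun s t (H : None = Some s) _ => match H with end
       | Some s0 => fun s t (H : Some s0 = Some s) =>
           match H in _ = m return (match m with Some s => In (Some t) s -> P t | None => True end) with
           | eq_refl =>
             (fix fo (l : list (option term)) : In (Some t) l -> P t :=
               match l with
               | [] => fun Hin => match Hin with end
               | o :: l' => fun Hin =>
                   match o as o' return (o' = Some t \/ In (Some t) l' -> P t) with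
                   | None => fun Hin => match Hin with
                                        | or_introl E => match E with end
                                        | or_intror H2 => fo l' H2 end
                   | Some u => fun Hin => match Hin with
                                          | or_introl E =>
                                            match E in _ = o2 return (match o2 with Some t2 => P t2 | None => True end) with
                                            | eq_refl => term_ind' u end
                                          | or_intror H2 => fo l' H2 end
                   end Hin
               end) s0
           end
       end)
      ((fix fd (l : list (term * term)) : forall a p, In (a, p) l -> P a /\ P p :=
         match l with
         | [] => fun a p Hin => match Hin with end
         | (a0, p0) :: l' => fun a p Hin =>
             match Hin with
             | or_introl E =>
               match E in _ = q return P (fst q) /\ P (snd q) with
               | eq_refl => conj (term_ind' a0) (term_ind' p0) end
             | or_intror H2 => fd l' a p H2
             end
         end) D)
  end.
End TI.

Lemma up_lt k f i : i < k -> up k f i = i.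
Proof. intro H; unfold up; destruct (Nat.ltb_spec i k); lia. Qed.
Lemma up_ge k f i : k <= i -> up k f i = k + f (i - k).
Proof. intro H; unfold up; destruct (Nat.ltb_spec i k); lia. Qed.
Lemma up_plus k f j : up k f (k + j) = k + f j.
Proof. rewrite up_ge by lia. f_equal. f_equal. lia. Qed.

Ltac mtc_tac IH1 IH2 IH3 :=
  idtac.

Lemma ren_ext : forall t rv rv' rm rm', (forall i, rv i = rv' i) -> (forall i, rm i = rm' i) ->
  ren rv rm t = ren rv' rm' t.
Proof.
  induction t using term_ind'; intros rv rv' rm rm' E1 E2; simpl; f_equal; auto.
  - apply IHt1; auto. intro i; unfold up; destruct (i <? k); auto.
  - apply IHt2; auto. intro i; unfold up; destruct (i <? k); auto.
  - apply IHt; auto. intro i; unfold up; destruct (i <? k); auto.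
  - destruct mu as [s|]; simpl; auto. f_equal. apply map_ext_in. intros [u|] Hin; simpl; auto.
    f_equal. eapply H; eauto.
  - apply map_ext_in. intros [a p] Hin; simpl. destruct (H0 a p Hin) as [Ha Hp].
    f_equal; auto. apply Hp; auto. intro i; unfold up; destruct (i <? k); auto.
Qed.

Lemma ren_ren : forall t rv rm rv' rm' rv'' rm'',
  (forall i, rv (rv' i) = rv'' i) -> (forall i, rm (rm' i) = rm'' i) ->
  ren rv rm (ren rv' rm' t) = ren rv'' rm'' t.
Proof.
  assert (HU : forall k f g h, (forall i, f (g i) = h i) -> forall i, up k f (up k g i) = up k h i).
  { intros k f g h E i. destruct (Nat.lt_ge_cases i k).
    - rewrite (up_lt k g), !up_lt; auto.
    - rewrite (up_ge k g) by lia. rewrite up_plus. rewrite up_ge by lia. rewrite E; auto. }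
  induction t using term_ind'; intros rv rm rv' rm' rv'' rm'' E1 E2; simpl; f_equal; auto.
  - destruct mu as [s|]; simpl; auto. f_equal. rewrite map_map. apply map_ext_in. intros [u|] Hin; simpl; auto.
    f_equal. eapply H; eauto.
  - rewrite map_map. apply map_ext_in. intros [a p] Hin; simpl. destruct (H0 a p Hin) as [Ha Hp].
    f_equal; auto.
Qed.

Lemma ren_idf : forall t rv rm, (forall i, rv i = i) -> (forall i, rm i = i) -> ren rv rm t = t.
Proof.
  assert (HU : forall k f, (forall i, f i = i) -> forall i, up k f i = i).
  { intros k f E i; unfold up; destruct (Nat.ltb_spec i k); auto. rewrite E; lia. }
  induction t using term_ind'; intros rv rm E1 E2; simpl; f_equal; auto.
  - destruct mu as [s|]; simpl; auto. f_equal. rewrite <- (map_id s) at 2. apply map_ext_in. intros [u|] Hin; simpl; auto.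
    f_equal. eapply H; eauto.
  - rewrite <- (map_id D) at 2. apply map_ext_in. intros [a p] Hin; simpl. destruct (H0 a p Hin) as [Ha Hp].
    f_equal; auto.
Qed.

Lemma subst_ext : forall t s s', (forall i, s i = s' i) -> subst s t = subst s' t.
Proof.
  induction t using term_ind'; intros sg sg' E; simpl; f_equal; auto.
  - apply IHt1. intro i; unfold upm; rewrite E; auto.
  - apply IHt2. intro i; unfold upv; rewrite E; auto.
  - apply IHt. intro i; unfold upv; rewrite E; auto.
  - destruct mu as [s|]; simpl; auto. f_equal. apply map_ext_in. intros [u|] Hin; simpl; auto.
    f_equal. eapply H; eauto.
  - apply map_ext_in. intros [a p] Hin; simpl. destruct (H0 a p Hin) as [Ha Hp].
    f_equal; auto. apply Hp. intro i; unfold upm; rewrite E; auto.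
Qed.

Lemma subst_idf : forall t s, (forall i, s i = Var i) -> subst s t = t.
Proof.
  induction t using term_ind'; intros sg E; simpl; f_equal; auto.
  - apply IHt1. intro i; unfold upm; rewrite E; auto.
  - apply IHt2. intro i; unfold upv; destruct (Nat.ltb_spec i k); auto. rewrite E; simpl; f_equal; lia.
  - apply IHt. intro i; unfold upv; destruct (Nat.ltb_spec i k); auto. rewrite E; simpl; f_equal; lia.
  - destruct mu as [s|]; simpl; auto. f_equal. rewrite <- (map_id s) at 2. apply map_ext_in. intros [u|] Hin; simpl; auto.
    f_equal. eapply H; eauto.
  - rewrite <- (map_id D) at 2. apply map_ext_in. intros [a p] Hin; simpl. destruct (H0 a p Hin) as [Ha Hp].
    f_equal; auto. apply Hp. intro i; unfold upm; rewrite E; auto.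
Qed.

Lemma ren_subst : forall t rv rm rv0 sg sg', (forall i, rv0 i = i) ->
  (forall i, ren rv rm (sg i) = sg' i) -> ren rv rm (subst sg t) = subst sg' (ren rv0 rm t).
Proof.
  assert (HM : forall k rv rm sg sg', (forall i, ren rv rm (sg i) = sg' i) ->
     forall i, ren rv (up k rm) (upm k sg i) = upm k sg' i).
  { intros k rv rm sg sg' E i. unfold upm. rewrite <- E.
    rewrite (ren_ren _ _ _ _ _ rv (fun j => k + rm j)); auto.
    - rewrite (ren_ren _ _ _ _ _ rv (fun j => k + rm j)); auto.
    - intro j; apply up_plus. }
  assert (HV : forall k rv rm sg sg', (forall i, ren rv rm (sg i) = sg' i) ->
     forall i, ren (up k rv) rm (upv k sg i) = upv k sg' i).
  { intros k rv rm sg sg' E i. unfold upv. destruct (Nat.ltb_spec i k).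
    - simpl. rewrite up_lt; auto.
    - rewrite <- E.
      rewrite (ren_ren _ _ _ _ _ (fun j => k + rv j) rm); auto.
      + rewrite (ren_ren _ _ _ _ _ (fun j => k + rv j) rm); auto.
      + intro j; apply up_plus. }
  assert (HU : forall k f, (forall i, f i = i) -> forall i, up k f i = i).
  { intros k f E i; unfold up; destruct (Nat.ltb_spec i k); auto. rewrite E; lia. }
  induction t using term_ind'; intros rv rm rv0 sg sg' E0 E; simpl; auto; try (f_equal; auto; fail).
  - rewrite E0; auto.
  - f_equal; auto.
    + destruct mu as [s|]; simpl; auto.
      f_equal. rewrite !map_map. apply map_ext_in. intros [u|] Hin; simpl; auto.
      f_equal. eapply H; eauto.
    + rewrite !map_map. apply map_ext_in. intros [a p] Hin; simpl. destruct (H0 a p Hin) as [Ha Hp].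
      f_equal; auto.
Qed.

Lemma subst_ren : forall t rv rm0 sg sg', (forall i, rm0 i = i) ->
  (forall i, sg (rv i) = sg' i) -> subst sg (ren rv rm0 t) = subst sg' t.
Proof.
  assert (HU : forall k f, (forall i, f i = i) -> forall i, up k f i = i).
  { intros k f E i; unfold up; destruct (Nat.ltb_spec i k); auto. rewrite E; lia. }
  assert (HV : forall k rv sg sg', (forall i, sg (rv i) = sg' i) ->
     forall i, upv k sg (up k rv i) = upv k sg' i).
  { intros k rv sg sg' E i. destruct (Nat.ltb_spec i k).
    - rewrite up_lt; auto. unfold upv. destruct (Nat.ltb_spec i k); auto; lia.
    - rewrite up_ge by lia. unfold upv. destruct (Nat.ltb_spec (k + rv (i - k)) k); try lia.
      destruct (Nat.ltb_spec i k); try lia. rewrite <- E. f_equal. f_equal. lia. }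
  assert (HM : forall k rv sg sg', (forall i, sg (rv i) = sg' i) ->
     forall i, upm k sg (rv i) = upm k sg' i).
  { intros k rv sg sg' E i. unfold upm. rewrite E; auto. }
  induction t using term_ind'; intros rv rm0 sg sg' E0 E; simpl; auto; try (rewrite E0; auto; fail).
  - f_equal; auto.
  - f_equal; auto.
  - f_equal; auto.
  - f_equal; auto.
    + destruct mu as [s|]; simpl; auto.
      f_equal. rewrite !map_map. apply map_ext_in. intros [u|] Hin; simpl; auto.
      f_equal. eapply H; eauto.
    + rewrite !map_map. apply map_ext_in. intros [a p] Hin; simpl. destruct (H0 a p Hin) as [Ha Hp].
      f_equal; auto.
Qed.

Lemma subst_subst : forall t tau sg th, (forall i, subst tau (sg i) = th i) ->
  subst tau (subst sg t) = subst th t.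
Proof.
  assert (HM : forall k tau sg th, (forall i, subst tau (sg i) = th i) ->
     forall i, subst (upm k tau) (upm k sg i) = upm k th i).
  { intros k tau sg th E i. unfold upm. rewrite <- E.
    symmetry. apply (ren_subst _ _ _ (fun j => j)); auto. }
  assert (HV : forall k tau sg th, (forall i, subst tau (sg i) = th i) ->
     forall i, subst (upv k tau) (upv k sg i) = upv k th i).
  { intros k tau sg th E i. unfold upv at 2 3. destruct (Nat.ltb_spec i k).
    - simpl. unfold upv. destruct (Nat.ltb_spec i k); auto; lia.
    - rewrite <- E. rewrite (subst_ren _ _ _ _ (fun j => ren (fun j => k + j) (fun j => j) (tau j))); auto.
      + symmetry. rewrite (ren_subst _ _ _ (fun j => j) _ (fun j => ren (fun j => k + j) (fun j => j) (tau j))); auto.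
        f_equal. apply ren_idf; auto.
      + intro j. unfold upv. destruct (Nat.ltb_spec (k + j) k); try lia. f_equal. f_equal. lia. }
  induction t using term_ind'; intros tau sg th E; simpl; auto.
  - f_equal; auto.
  - f_equal; auto.
  - f_equal; auto.
  - f_equal; auto.
    + destruct mu as [s|]; simpl; auto.
      f_equal. rewrite !map_map. apply map_ext_in. intros [u|] Hin; simpl; auto.
      f_equal. eapply H; eauto.
    + rewrite !map_map. apply map_ext_in. intros [a p] Hin; simpl. destruct (H0 a p Hin) as [Ha Hp].
      f_equal; auto.
Qed.

Definition isg (k : nat) (s : list (option term)) (i : nat) : term :=
  if i <? k then match nth_error s i with Some (Some t) => t | _ => botT end else Var (i - k).

Lemma inst_isg k s b : inst k s b = subst (isg k s) b.
Proof. reflexivity. Qed.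

Lemma nth_error_mapo (f : term -> term) (s : list (option term)) i :
  nth_error (map (option_map f) s) i = option_map (option_map f) (nth_error s i).
Proof. apply nth_error_map. Qed.

Lemma ren_inst k s b rv rm :
  ren rv rm (inst k s b) = inst k (map (option_map (ren rv rm)) s) (ren (up k rv) rm b).
Proof.
  rewrite !inst_isg.
  rewrite (ren_subst _ _ _ (fun j => j) _ (fun i => ren rv rm (isg k s i))); auto.
  replace (ren (up k rv) rm b) with (ren (up k rv) (fun j => j) (ren (fun j => j) rm b))
    by (apply ren_ren; auto).
  rewrite (subst_ren _ (up k rv) (fun j => j) _ (fun i => ren rv rm (isg k s i))); auto.
  intro i. unfold isg. destruct (Nat.ltb_spec i k).
  - rewrite up_lt by auto. destruct (Nat.ltb_spec i k); try lia.
    rewrite nth_error_mapo. destruct (nth_error s i) as [[u|]|]; reflexivity.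
  - rewrite up_ge by lia. destruct (Nat.ltb_spec (k + rv (i - k)) k); try lia.
    destruct (Nat.ltb_spec i k); try lia. simpl. f_equal. lia.
Qed.

Lemma subst_inst k s b sg :
  subst sg (inst k s b) = inst k (map (option_map (subst sg)) s) (subst (upv k sg) b).
Proof.
  rewrite !inst_isg.
  rewrite (subst_subst _ _ _ (fun i => subst sg (isg k s i))); auto.
  rewrite (subst_subst _ _ _ (fun i => subst sg (isg k s i))); auto.
  intro i. unfold upv, isg. destruct (Nat.ltb_spec i k).
  - simpl. destruct (Nat.ltb_spec i k); try lia.
    rewrite nth_error_mapo. destruct (nth_error s i) as [[u|]|]; reflexivity.
  - simpl. destruct (Nat.ltb_spec i k); try lia.
    rewrite (subst_ren _ _ _ _ (fun j => Var j)); auto.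
    + apply subst_idf; auto.
    + intro j. destruct (Nat.ltb_spec (k + j) k); try lia. f_equal; lia.
Qed.

Scheme pr_mut := Induction for pr Sort Prop
with pr_dm_mut := Induction for pr_dm Sort Prop
with pr_os_mut := Induction for pr_os Sort Prop
with pr_D_mut := Induction for pr_D Sort Prop.

Lemma pr_os_refl : forall s, pr_os s s.
Proof. induction s as [|[u|] s IH]; constructor; auto; apply pr_id. Qed.
Lemma pr_dm_refl : forall m, pr_dm m m.
Proof. intros [s|]; constructor. apply pr_os_refl. Qed.
Lemma pr_D_refl : forall D, pr_D D D.
Proof. induction D as [|[a p] D IH]; constructor; auto; apply pr_id. Qed.

Definition inj (f : nat -> nat) := forall i j, f i = f j -> i = j.
Lemma inj_up k f : inj f -> inj (up k f).
Proof.
  intros H i j E. unfold up in E. destruct (Nat.ltb_spec i k), (Nat.ltb_spec j k); try lia.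
  apply Nat.add_cancel_l in E. apply H in E. lia.
Qed.

Lemma failure_ren k a p rv rm : inj rm -> failure k a p -> failure k (ren rv rm a) (ren rv (up k rm) p).
Proof.
  intros Hi Hf; destruct Hf; simpl; try constructor; try (rewrite up_ge by lia; lia).
  rewrite up_ge by lia. replace (k + rm (x - k) - k) with (rm (x - k)) by lia.
  intro E. apply Hi in E. lia.
Qed.

Lemma nth_mapo (f : term -> term) s i : nth i (map (option_map f) s) None = option_map f (nth i s None).
Proof.
  change None with (option_map f None) at 1. apply map_nth.
Qed.

Lemma dom_is_map k f s : dom_is k (map (option_map f) s) <-> dom_is k s.
Proof.
  unfold dom_is. split; intros H i; rewrite <- H; rewrite nth_mapo;
  destruct (nth i s None); simpl; split; congruence.
Qed.

Lemma merge_map (f : term -> term) : forall l1 l2,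
  merge (map (option_map f) l1) (map (option_map f) l2) = option_map (map (option_map f)) (merge l1 l2).
Proof.
  induction l1 as [|o1 l1 IH]; intros [|o2 l2]; simpl; auto.
  destruct o1, o2; simpl; auto; rewrite IH; destruct (merge l1 l2); auto.
Qed.

Lemma single_map (f : term -> term) x a : map (option_map f) (single x a) = single x (f a).
Proof. unfold single. rewrite map_app, map_repeat; reflexivity. Qed.

Lemma dunion_map (f : term -> term) m1 m2 :
  option_map (map (option_map f)) (dunion m1 m2) = dunion (option_map (map (option_map f)) m1) (option_map (map (option_map f)) m2).
Proof. destruct m1, m2; simpl; auto. rewrite merge_map; auto. Qed.

Definition mapD (f g : term -> term) (D : list (term * term)) :=
  map (fun ap => (f (fst ap), g (snd ap))) D.

Lemma ren_botT rv rm : ren rv rm botT = botT.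
Proof. reflexivity. Qed.

Lemma pr_ren : forall t t', pr t t' -> forall rv rm, inj rm -> pr (ren rv rm t) (ren rv rm t').
Proof.
  apply (pr_mut (fun t t' _ => forall rv rm, inj rm -> pr (ren rv rm t) (ren rv rm t'))
    (fun m m' _ => forall rv rm, inj rm ->
      pr_dm (option_map (map (option_map (ren rv rm))) m) (option_map (map (option_map (ren rv rm))) m'))
    (fun s s' _ => forall rv rm, inj rm ->
      pr_os (map (option_map (ren rv rm)) s) (map (option_map (ren rv rm)) s'))
    (fun D D' _ => forall rv rm rm2, inj rm -> inj rm2 ->
      pr_D (mapD (ren rv rm) (ren rv rm2) D) (mapD (ren rv rm) (ren rv rm2) D')));
  intros; simpl; try (constructor; eauto using inj_up; fail).
  - rewrite !map_app; simpl. rewrite (up_lt k rm x) by auto. rewrite dunion_map; simpl.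
    rewrite single_map. apply pr_match_bind; eauto using inj_up.
  - rewrite !map_app; simpl. rewrite (up_ge k rm x) by auto. subst y.
    apply pr_match_same; eauto using inj_up; lia.
  - rewrite !map_app; simpl. apply pr_match_dat; eauto using inj_up.
  - rewrite !map_app; simpl. apply pr_match_fail; eauto using inj_up, failure_ren.
  - rewrite ren_inst. apply pr_res; eauto using inj_up. apply dom_is_map; auto.
  - apply pr_res_dom. rewrite dom_is_map; auto.
Qed.

Lemma inj_plus k : inj (fun j => k + j).
Proof. intros i j E; lia. Qed.
Lemma inj_id : inj (fun j => j).
Proof. intros i j E; lia. Qed.

Lemma pr_upm k sg sg' : (forall i, pr (sg i) (sg' i)) -> forall i, pr (upm k sg i) (upm k sg' i).
Proof. intros H i; unfold upm; apply pr_ren; auto using inj_plus. Qed.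
Lemma pr_upv k sg sg' : (forall i, pr (sg i) (sg' i)) -> forall i, pr (upv k sg i) (upv k sg' i).
Proof. intros H i; unfold upv; destruct (i <? k). apply pr_id. apply pr_ren; auto using inj_id. Qed.

Lemma pr_os_map_In (f g : term -> term) : forall s, (forall t, In (Some t) s -> pr (f t) (g t)) ->
  pr_os (map (option_map f) s) (map (option_map g) s).
Proof.
  induction s as [|[u|] s IH]; intros H; simpl; constructor; auto.
  - apply H; simpl; auto.
  - apply IH; intros; apply H; simpl; auto.
  - apply IH; intros; apply H; simpl; auto.
Qed.

Lemma pr_D_map_In (f f' g g' : term -> term) : forall D, (forall a p, In (a, p) D -> pr (f a) (f' a) /\ pr (g p) (g' p)) ->
  pr_D (mapD f g D) (mapD f' g' D).
Proof.
  induction D as [|[a p] D IH]; intros H; simpl; constructor.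
  - apply (H a p); simpl; auto.
  - apply (H a p); simpl; auto.
  - apply IH; intros; apply H; simpl; auto.
Qed.

Lemma pr_subst_refl : forall t sg sg', (forall i, pr (sg i) (sg' i)) -> pr (subst sg t) (subst sg' t).
Proof.
  induction t using term_ind'; intros sg sg' E; simpl; auto;
    try (constructor; auto using pr_upm, pr_upv; fail).
  - constructor; auto using pr_upv.
    + destruct mu as [s|]; simpl; constructor.
      apply pr_os_map_In. intros; eapply H; eauto.
    + apply (pr_D_map_In (subst sg) (subst sg') (subst (upm k sg)) (subst (upm k sg'))).
      intros a p Hin; destruct (H0 a p Hin); split; auto using pr_upm.
Qed.

Lemma failure_subst k a p sg tau : failure k a p -> failure k (subst sg a) (subst tau p).
Proof. intros Hf; destruct Hf; simpl; constructor; auto. Qed.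

Lemma subst_botT sg : subst sg botT = botT.
Proof. reflexivity. Qed.

Lemma pr_subst : forall t t', pr t t' -> forall sg sg', (forall i, pr (sg i) (sg' i)) -> pr (subst sg t) (subst sg' t').
Proof.
  apply (pr_mut (fun t t' _ => forall sg sg', (forall i, pr (sg i) (sg' i)) -> pr (subst sg t) (subst sg' t'))
    (fun m m' _ => forall sg sg', (forall i, pr (sg i) (sg' i)) ->
      pr_dm (option_map (map (option_map (subst sg))) m) (option_map (map (option_map (subst sg'))) m'))
    (fun s s' _ => forall sg sg', (forall i, pr (sg i) (sg' i)) ->
      pr_os (map (option_map (subst sg)) s) (map (option_map (subst sg')) s'))
    (fun D D' _ => forall sg sg' tau tau', (forall i, pr (sg i) (sg' i)) -> (forall i, pr (tau i) (tau' i)) ->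
      pr_D (mapD (subst sg) (subst tau) D) (mapD (subst sg') (subst tau') D')));
  intros; simpl; try (constructor; eauto using pr_upm, pr_upv; fail).
  - apply pr_subst_refl; auto.
  - rewrite !map_app; simpl. rewrite dunion_map; simpl.
    rewrite single_map. apply pr_match_bind; eauto using pr_upm, pr_upv.
  - rewrite !map_app; simpl. apply pr_match_same; eauto using pr_upm, pr_upv.
  - rewrite !map_app; simpl. apply pr_match_dat; eauto using pr_upm, pr_upv.
  - rewrite !map_app; simpl. apply pr_match_fail; eauto using pr_upm, pr_upv.
    apply failure_subst; auto.
  - rewrite subst_inst. apply pr_res; eauto using pr_upv. apply dom_is_map; auto.
  - apply pr_res_dom. rewrite dom_is_map; auto.
Qed.

Lemma pr_os_nth : forall s s', pr_os s s' -> forall i,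
  (nth_error s i = None /\ nth_error s' i = None) \/
  (nth_error s i = Some None /\ nth_error s' i = Some None) \/
  (exists t t', nth_error s i = Some (Some t) /\ nth_error s' i = Some (Some t') /\ pr t t').
Proof.
  induction 1; intros [|i]; simpl; auto.
  right; right; eauto.
Qed.

Lemma pr_inst k s s' b b' : pr b b' -> pr_os s s' -> pr (inst k s b) (inst k s' b').
Proof.
  intros Hb Hs. unfold inst. apply pr_subst; auto.
  intro i. destruct (i <? k). 2: apply pr_id.
  destruct (pr_os_nth s s' Hs i) as [[E1 E2]|[[E1 E2]|(t&t'&E1&E2&Ht)]]; rewrite E1, E2; auto; apply pr_id.
Qed.

Lemma merge_nil_r l : merge l [] = Some l.
Proof. destruct l; reflexivity. Qed.

Lemma merge_comm : forall l1 l2, merge l1 l2 = merge l2 l1.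
Proof.
  induction l1 as [|o1 l1 IH]; intros [|o2 l2]; simpl; auto.
  destruct o1, o2; simpl; auto; rewrite IH; auto.
Qed.

Definition obind (m : option (list (option term))) (f : list (option term) -> option (list (option term))) :=
  match m with Some l => f l | None => None end.

Lemma merge_assoc : forall l1 l2 l3,
  obind (merge l1 l2) (fun l => merge l l3) = obind (merge l2 l3) (fun l => merge l1 l).
Proof.
  induction l1 as [|o1 l1 IH]; intros [|o2 l2] [|o3 l3]; simpl; auto; unfold obind.
  - match goal with |- _ = match ?Y with _ => _ end => destruct Y; reflexivity end.
  - match goal with |- match ?Y with _ => _ end = _ => destruct Y; try rewrite merge_nil_r; reflexivity end.
  - specialize (IH l2 l3). unfold obind in *.
    destruct o1, o2, o3; simpl;
    destruct (merge l1 l2) eqn:E1; destruct (merge l2 l3) eqn:E2; simpl in *; auto;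
    try (rewrite IH; reflexivity); try (rewrite <- IH; reflexivity);
    try (destruct (merge l1 l0); simpl; congruence);
    try (destruct (merge l l3); simpl; congruence).
Qed.

Lemma dunion_swap m a b : dunion (dunion m (Some a)) (Some b) = dunion (dunion m (Some b)) (Some a).
Proof.
  destruct m as [l|]; simpl; auto.
  pose proof (merge_assoc l a b) as H1. pose proof (merge_assoc l b a) as H2.
  unfold obind in *.
  transitivity (match merge l a with Some x => merge x b | None => None end).
  { destruct (merge l a); reflexivity. }
  rewrite H1, merge_comm, <- H2. destruct (merge l b); reflexivity.
Qed.

Lemma pr_os_merge : forall l1 l1', pr_os l1 l1' -> forall l2 l2', pr_os l2 l2' ->
  pr_dm (merge l1 l2) (merge l1' l2').
Proof.
  induction 1; intros l2 l2' H2; destruct H2; simpl;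
    try (specialize (IHpr_os _ _ H2); destruct IHpr_os; simpl);
    try constructor; try constructor; auto.
Qed.

Lemma pr_os_single x a a' : pr a a' -> pr_os (single x a) (single x a').
Proof. intro H; unfold single; induction x; simpl; repeat constructor; auto. Qed.

Inductive act := ABind (x : nat) (a : term) | ANone | AFail.
Definition actF (c : act) (m : dmatch) : dmatch :=
  match c with ABind x a => dunion m (Some (single x a)) | ANone => m | AFail => None end.
Inductive pr_act : act -> act -> Prop :=
| pa_bind : forall x a a', pr a a' -> pr_act (ABind x a) (ABind x a')
| pa_none : pr_act ANone ANone
| pa_fail : pr_act AFail AFail.

Lemma pr_dm_act m m' c c' : pr_dm m m' -> pr_act c c' -> pr_dm (actF c m) (actF c' m').
Proof.
  intros Hm Hc; destruct Hc; simpl; auto; try constructor.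
  destruct Hm; simpl; try constructor. apply pr_os_merge; auto. apply pr_os_single; auto.
Qed.

Lemma actF_None c : actF c None = None.
Proof. destruct c; reflexivity. Qed.

Lemma actF_comm c1 c2 m : actF c1 (actF c2 m) = actF c2 (actF c1 m).
Proof.
  destruct c1, c2; simpl; auto; try apply dunion_swap; destruct m; reflexivity.
Qed.

Inductive pstep (k : nat) : term * term -> act -> list (term * term) -> Prop :=
| ps_bind : forall a a' x, x < k -> pr a a' -> pstep k (a, Mat x) (ABind x a') []
| ps_same : forall x y, k <= x -> x - k = y -> pstep k (Mat y, Mat x) ANone []
| ps_dat : forall a1 a1' a2 a2' p1 p1' p2 p2', pr a1 a1' -> pr a2 a2' -> pr p1 p1' -> pr p2 p2' ->
    pstep k (Dat a1 a2, Dat p1 p2) ANone [(a1', p1'); (a2', p2')]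
| ps_fail : forall a p, failure k a p -> pstep k (a, p) AFail [].

Lemma pr_step b b' k mu mu' Dl Dl' q Dr Dr' c E :
  pstep k q c E -> pr b b' -> pr_dm mu mu' -> pr_D Dl Dl' -> pr_D Dr Dr' ->
  pr (Mtc b k mu (Dl ++ q :: Dr)) (Mtc b' k (actF c mu') (Dl' ++ E ++ Dr')).
Proof.
  intros Hs Hb Hm Hl Hr; destruct Hs; simpl.
  - apply pr_match_bind; auto.
  - apply pr_match_same; auto.
  - apply pr_match_dat; auto.
  - apply pr_match_fail; auto.
Qed.

Lemma inv_Var i t : pr (Var i) t -> t = Var i.
Proof. intro H; inversion H; auto. Qed.
Lemma inv_Mat i t : pr (Mat i) t -> t = Mat i.
Proof. intro H; inversion H; auto. Qed.
Lemma inv_Dat a b t : pr (Dat a b) t -> exists a' b', t = Dat a' b' /\ pr a a' /\ pr b b'.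
Proof. intro H; inversion H; subst; eauto using pr_id. Qed.
Lemma inv_Abs k a b t : pr (Abs k a b) t -> exists a' b', t = Abs k a' b' /\ pr a a' /\ pr b b'.
Proof. intro H; inversion H; subst; eauto using pr_id. Qed.
Lemma inv_App u v t : pr (App u v) t ->
  (exists u' v', t = App u' v' /\ pr u u' /\ pr v v') \/
  (exists k p b p' b' a', u = Abs k p b /\ t = Mtc b' k (Some []) [(a', p')] /\ pr p p' /\ pr b b' /\ pr v a') \/
  (exists x v', u = Mat x /\ t = Dat (Mat x) v' /\ pr v v') \/
  (exists t1 t2 t1' t2' v', u = Dat t1 t2 /\ t = Dat (Dat t1' t2') v' /\ pr t1 t1' /\ pr t2 t2' /\ pr v v').
Proof.
  intro H; inversion H; subst.
  - left; eauto using pr_id.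
  - left; eauto.
  - right; left; do 6 eexists; repeat split; eauto.
  - right; right; left; eauto.
  - right; right; right; eauto 10.
Qed.

Lemma inv_Mtc b k mu D t : pr (Mtc b k mu D) t ->
  (exists b' mu' D', t = Mtc b' k mu' D' /\ pr b b' /\ pr_dm mu mu' /\ pr_D D D') \/
  (exists b' mu' Dl Dl' q Dr Dr' c E, D = Dl ++ q :: Dr /\ t = Mtc b' k (actF c mu') (Dl' ++ E ++ Dr') /\
      pstep k q c E /\ pr b b' /\ pr_dm mu mu' /\ pr_D Dl Dl' /\ pr_D Dr Dr') \/
  (exists s b' s', mu = Some s /\ D = [] /\ dom_is k s /\ pr b b' /\ pr_os s s' /\ t = inst k s' b') \/
  (exists s, mu = Some s /\ D = [] /\ ~ dom_is k s /\ t = botT) \/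
  (mu = None /\ t = botT).
Proof.
  intro H; inversion H; subst.
  - left; eauto 10 using pr_id, pr_dm_refl, pr_D_refl.
  - left; eauto 10.
  - right; left. do 9 eexists. split; [reflexivity|]. split; [|split; [apply ps_bind; eauto|eauto]].
    reflexivity.
  - right; left. do 9 eexists. split; [reflexivity|]. split; [|split; [apply ps_same; eauto|eauto]].
    reflexivity.
  - right; left. do 9 eexists. split; [reflexivity|]. split; [|split; [apply ps_dat; eauto|eauto 10]].
    reflexivity.
  - right; left. do 9 eexists. split; [reflexivity|]. split; [|split; [apply ps_fail; eauto|eauto 10 using pr_dm_refl]].
    reflexivity.
  - right; right; left; eauto 10.
  - right; right; right; left; eauto.
  - right; right; right; right; eauto.
Qed.

Definition diamond t := forall t1 t2, pr t t1 -> pr t t2 -> exists t3, pr t1 t3 /\ pr t2 t3.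

Lemma pr_D_app : forall l1 l1' l2 l2', pr_D l1 l1' -> pr_D l2 l2' -> pr_D (l1 ++ l2) (l1' ++ l2').
Proof. intros l1 l1' l2 l2' H1 H2; induction H1; simpl; auto; constructor; auto. Qed.

Lemma pr_D_app_inv : forall l1 l2 D', pr_D (l1 ++ l2) D' ->
  exists l1' l2', D' = l1' ++ l2' /\ pr_D l1 l1' /\ pr_D l2 l2'.
Proof.
  induction l1 as [|[a p] l1 IH]; intros l2 D' H; simpl in *.
  - exists [], D'; repeat split; auto; constructor.
  - inversion H; subst. destruct (IH _ _ H6) as (x & y & -> & Hx & Hy).
    exists ((a', p') :: x), y; repeat split; auto; constructor; auto.
Qed.

Lemma pr_D_nil D' : pr_D [] D' -> D' = [].
Proof. intro H; inversion H; auto. Qed.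

Lemma pr_D_split Dl a p Dr D' : pr_D (Dl ++ (a, p) :: Dr) D' ->
  exists Dl' a' p' Dr', D' = Dl' ++ (a', p') :: Dr' /\ pr_D Dl Dl' /\ pr a a' /\ pr p p' /\ pr_D Dr Dr'.
Proof.
  intro H. destruct (pr_D_app_inv _ _ _ H) as (x & y & -> & Hx & Hy).
  inversion Hy; subst. eexists x, _, _, _; repeat split; eauto.
Qed.

Lemma app_cons_eq {T} : forall (l1 l2 r1 r2 : list T) (x y : T), l1 ++ x :: r1 = l2 ++ y :: r2 ->
  (l1 = l2 /\ x = y /\ r1 = r2) \/
  (exists B, l2 = l1 ++ x :: B /\ r1 = B ++ y :: r2) \/
  (exists B, l1 = l2 ++ y :: B /\ r2 = B ++ x :: r1).
Proof.
  induction l1 as [|a l1 IH]; intros [|b l2] r1 r2 x y E; simpl in *; inversion E; subst.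
  - left; auto.
  - right; left; exists l2; auto.
  - right; right; exists l1; auto.
  - destruct (IH _ _ _ _ _ H1) as [(-> & -> & ->)|[(B & -> & ->)|(B & -> & ->)]].
    + left; auto.
    + right; left; exists B; auto.
    + right; right; exists B; auto.
Qed.

Lemma pr_os_none : forall s s', pr_os s s' -> forall i, (nth i s None = None <-> nth i s' None = None).
Proof.
  induction 1; intros [|i]; simpl; try tauto; auto; split; congruence.
Qed.

Lemma pr_os_dom k s s' : pr_os s s' -> (dom_is k s <-> dom_is k s').
Proof.
  intro H; unfold dom_is; split; intros Hd i; rewrite <- Hd; pose proof (pr_os_none _ _ H i); tauto.
Qed.

Lemma join_os : forall s s1, pr_os s s1 -> forall s2, pr_os s s2 ->
  (forall t, In (Some t) s -> diamond t) -> exists s3, pr_os s1 s3 /\ pr_os s2 s3.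
Proof.
  induction 1 as [|s s' H IHs|t t' s s' Ht H IHs]; intros s2 H2 IH.
  - inversion H2; subst. exists []; split; constructor.
  - inversion H2 as [|s0 s0' Hx|]; subst.
    destruct (IHs _ Hx) as (s3 & A1 & A2). intros; apply IH; simpl; auto.
    exists (None :: s3); split; constructor; auto.
  - inversion H2 as [| |t0 t0' s0 s0' Ht0 Hx]; subst.
    destruct (IHs _ Hx) as (s3 & A1 & A2). intros; apply IH; simpl; auto.
    destruct (IH t (or_introl eq_refl) _ _ Ht Ht0) as (t3 & B1 & B2).
    exists (Some t3 :: s3); split; constructor; auto.
Qed.

Lemma join_dm m m1 m2 : pr_dm m m1 -> pr_dm m m2 ->
  (forall s t, m = Some s -> In (Some t) s -> diamond t) -> exists m3, pr_dm m1 m3 /\ pr_dm m2 m3.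
Proof.
  intros H1 H2 IH; destruct H1; inversion H2; subst.
  - exists None; split; constructor.
  - destruct (join_os _ _ H _ H1) as (s3 & A1 & A2). intros; eapply IH; eauto.
    exists (Some s3); split; constructor; auto.
Qed.

Lemma join_D : forall D D1, pr_D D D1 -> forall D2, pr_D D D2 ->
  (forall a p, In (a, p) D -> diamond a /\ diamond p) -> exists D3, pr_D D1 D3 /\ pr_D D2 D3.
Proof.
  induction 1 as [|a a' p p' D D' Ha Hp H IHD]; intros D2 H2 IH.
  - inversion H2; subst. exists []; split; constructor.
  - inversion H2 as [|a0 a0' p0 p0' D0 D0' Ha0 Hp0 Hx]; subst.
    destruct (IHD _ Hx) as (s3 & A1 & A2). intros; apply IH; simpl; auto.
    destruct (IH a p (or_introl eq_refl)) as [Ia Ip].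
    destruct (Ia _ _ Ha Ha0) as (a3 & B1 & B2).
    destruct (Ip _ _ Hp Hp0) as (p3 & C1 & C2).
    exists ((a3, p3) :: s3); split; constructor; auto.
Qed.

Lemma failure_pr k a p a' p' : failure k a p -> pr a a' -> pr p p' -> failure k a' p'.
Proof.
  intros Hf Ha Hp; destruct Hf.
  - apply inv_Mat in Ha; apply inv_Mat in Hp; subst; constructor; auto.
  - apply inv_Mat in Hp; apply inv_Dat in Ha as (?&?&->&_); subst; constructor; auto.
  - apply inv_Mat in Hp; apply inv_Abs in Ha as (?&?&->&_); subst; constructor; auto.
  - apply inv_Mat in Ha; apply inv_Dat in Hp as (?&?&->&_); subst; constructor; auto.
  - apply inv_Abs in Ha as (?&?&->&_); apply inv_Dat in Hp as (?&?&->&_); constructor; auto.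
  - apply inv_Abs in Hp as (?&?&->&_); constructor; auto.
Qed.

Lemma step_pr_join k a p c E u1 w1 : diamond a -> diamond p -> pstep k (a, p) c E -> pr a u1 -> pr p w1 ->
  exists c3 E3, pstep k (u1, w1) c3 E3 /\ pr_act c c3 /\ pr_D E E3.
Proof.
  intros Ia Ip Hs H1 H2.
  inversion Hs as [a0 a' x Hx Ha'| x y Hx Hy | a1 a1' a2 a2' p1 p1' p2 p2' Q1 Q2 Q3 Q4 | a0 p0 Hf]; subst.
  - apply inv_Mat in H2; subst. destruct (Ia _ _ H1 Ha') as (a3 & A1 & A2).
    exists (ABind x a3), []; repeat split; constructor; auto.
  - apply inv_Mat in H1; apply inv_Mat in H2; subst. exists ANone, []; repeat split; constructor; auto.
  - destruct (Ia _ _ H1 (pr_dat _ _ _ _ Q1 Q2)) as (a3 & A1 & A2).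
    destruct (Ip _ _ H2 (pr_dat _ _ _ _ Q3 Q4)) as (p3 & B1 & B2).
    apply inv_Dat in H1 as (x1 & x2 & -> & _).
    apply inv_Dat in H2 as (y1 & y2 & -> & _).
    apply inv_Dat in A1 as (z1 & z2 & -> & Z1 & Z2).
    apply inv_Dat in B1 as (w1' & w2 & -> & W1 & W2).
    apply inv_Dat in A2 as (?&?&E1&Z3&Z4). injection E1 as <- <-.
    apply inv_Dat in B2 as (?&?&E2&W3&W4). injection E2 as <- <-.
    exists ANone, [(z1, w1'); (z2, w2)]; repeat split.
    + constructor; auto.
    + constructor.
    + repeat constructor; auto.
  - exists AFail, []; repeat split; constructor. eapply failure_pr; eauto.
Qed.

Lemma step_step_join k a p c1 E1 c2 E2 : diamond a -> diamond p ->
  pstep k (a, p) c1 E1 -> pstep k (a, p) c2 E2 ->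
  exists c3 E3, pr_act c1 c3 /\ pr_act c2 c3 /\ pr_D E1 E3 /\ pr_D E2 E3.
Proof.
  intros Ia Ip S1 S2.
  inversion S1 as [a0 a' x Hx Ha'| x y Hx Hy | a1 a1' a2 a2' p1 p1' p2 p2' Q1 Q2 Q3 Q4 | a0 p0 Hf]; subst;
  inversion S2 as [b0 b' x' Hx' Hb'| x' y' Hx' Hy' | b1 b1' b2 b2' r1 r1' r2 r2' R1 R2 R3 R4 | b0 r0 Hf']; subst;
    try (exfalso; lia); try (match goal with H : failure _ _ _ |- _ => inversion H; subst; lia end).
  - destruct (Ia _ _ Ha' Hb') as (a3 & A1 & A2).
    exists (ABind x a3), []; repeat split; constructor; auto.
  - exists ANone, []; repeat split; constructor.
  - destruct (Ia _ _ (pr_dat _ _ _ _ Q1 Q2) (pr_dat _ _ _ _ R1 R2)) as (a3 & A1 & A2).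
    destruct (Ip _ _ (pr_dat _ _ _ _ Q3 Q4) (pr_dat _ _ _ _ R3 R4)) as (p3 & B1 & B2).
    apply inv_Dat in A1 as (z1 & z2 & -> & Z1 & Z2).
    apply inv_Dat in B1 as (w1 & w2 & -> & W1 & W2).
    apply inv_Dat in A2 as (?&?&E1'&Z3&Z4). injection E1' as <- <-.
    apply inv_Dat in B2 as (?&?&E2'&W3&W4). injection E2' as <- <-.
    exists ANone, [(z1, w1); (z2, w2)]; repeat split; try constructor; repeat constructor; auto.
  - exists AFail, []; repeat split; constructor.
Qed.

Ltac subIH ID := intros ?a0 ?p0 ?Hin; apply ID; rewrite ?in_app_iff in *; simpl in *;
  rewrite ?in_app_iff in *; simpl in *; tauto.

Lemma diff_pos b k mu A a p B a' p' C b1 mu1 Dl1 Dr1 c1 E1 b2 mu2 Dl2 Dr2 c2 E2 :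
  diamond b -> (forall s t, mu = Some s -> In (Some t) s -> diamond t) ->
  (forall a0 p0, In (a0, p0) (A ++ (a, p) :: B ++ (a', p') :: C) -> diamond a0 /\ diamond p0) ->
  pstep k (a, p) c1 E1 -> pr b b1 -> pr_dm mu mu1 -> pr_D A Dl1 -> pr_D (B ++ (a', p') :: C) Dr1 ->
  pstep k (a', p') c2 E2 -> pr b b2 -> pr_dm mu mu2 -> pr_D (A ++ (a, p) :: B) Dl2 -> pr_D C Dr2 ->
  exists t3, pr (Mtc b1 k (actF c1 mu1) (Dl1 ++ E1 ++ Dr1)) t3 /\ pr (Mtc b2 k (actF c2 mu2) (Dl2 ++ E2 ++ Dr2)) t3.
Proof.
  intros Ib Imu ID S1 Hb1 Hm1 HA1 HR1 S2 Hb2 Hm2 HL2 HC2.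
  destruct (pr_D_split _ _ _ _ _ HR1) as (B1 & a'1 & p'1 & C1 & -> & HB1 & Ha'1 & Hp'1 & HC1).
  destruct (pr_D_split _ _ _ _ _ HL2) as (A2 & a2 & p2 & B2 & -> & HA2 & Ha2 & Hp2 & HB2).
  assert (Ia : diamond a /\ diamond p) by (apply ID; rewrite in_app_iff; simpl; auto).
  assert (Ia' : diamond a' /\ diamond p') by (apply ID; rewrite in_app_iff; simpl; rewrite in_app_iff; simpl; auto).
  destruct Ia as [Ia Ip]; destruct Ia' as [Ia' Ip'].
  destruct (step_pr_join _ _ _ _ _ _ _ Ia Ip S1 Ha2 Hp2) as (c1' & E1' & S1' & Hc1 & HE1).
  destruct (step_pr_join _ _ _ _ _ _ _ Ia' Ip' S2 Ha'1 Hp'1) as (c2' & E2' & S2' & Hc2 & HE2).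
  destruct (join_D _ _ HA1 _ HA2) as (A3 & X1 & X2). subIH ID.
  destruct (join_D _ _ HB1 _ HB2) as (B3 & Y1 & Y2). subIH ID.
  destruct (join_D _ _ HC1 _ HC2) as (C3 & Z1 & Z2). subIH ID.
  destruct (Ib _ _ Hb1 Hb2) as (b3 & W1 & W2).
  destruct (join_dm _ _ _ Hm1 Hm2 Imu) as (mu3 & M1 & M2).
  exists (Mtc b3 k (actF c2' (actF c1' mu3)) ((A3 ++ E1' ++ B3) ++ E2' ++ C3)). split.
  - replace (Dl1 ++ E1 ++ B1 ++ (a'1, p'1) :: C1) with ((Dl1 ++ E1 ++ B1) ++ (a'1, p'1) :: C1)
      by (rewrite <- !app_assoc; reflexivity).
    apply pr_step; auto.
    + apply pr_dm_act; auto.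
    + apply pr_D_app; auto. apply pr_D_app; auto.
  - replace ((A2 ++ (a2, p2) :: B2) ++ E2 ++ Dr2) with (A2 ++ (a2, p2) :: (B2 ++ E2 ++ Dr2))
      by (rewrite <- !app_assoc; reflexivity).
    replace ((A3 ++ E1' ++ B3) ++ E2' ++ C3) with (A3 ++ E1' ++ (B3 ++ E2' ++ C3))
      by (rewrite <- !app_assoc; reflexivity).
    rewrite actF_comm. apply pr_step; auto.
    + apply pr_dm_act; auto.
    + apply pr_D_app; auto. apply pr_D_app; auto.
Qed.

Lemma pr_dm_some_inv s m : pr_dm (Some s) m -> exists s', m = Some s' /\ pr_os s s'.
Proof. intro H; inversion H; subst; eauto. Qed.
Lemma pr_dm_none_inv m : pr_dm None m -> m = None.
Proof. intro H; inversion H; auto. Qed.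

Lemma H12 b k mu Dl a p Dr b1 mu1 D1 c E b2 mu2 Dl2 Dr2 :
  diamond b -> (forall s t, mu = Some s -> In (Some t) s -> diamond t) ->
  (forall a0 p0, In (a0, p0) (Dl ++ (a, p) :: Dr) -> diamond a0 /\ diamond p0) ->
  pr b b1 -> pr_dm mu mu1 -> pr_D (Dl ++ (a, p) :: Dr) D1 ->
  pstep k (a, p) c E -> pr b b2 -> pr_dm mu mu2 -> pr_D Dl Dl2 -> pr_D Dr Dr2 ->
  exists t3, pr (Mtc b1 k mu1 D1) t3 /\ pr (Mtc b2 k (actF c mu2) (Dl2 ++ E ++ Dr2)) t3.
Proof.
  intros Ib Imu ID Hb1 Hm1 HD1 S Hb2 Hm2 HL2 HR2.
  destruct (pr_D_split _ _ _ _ _ HD1) as (Dl1 & a1 & p1 & Dr1 & -> & HL1 & Ha1 & Hp1 & HR1).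
  assert (Ia : diamond a /\ diamond p) by (apply ID; rewrite in_app_iff; simpl; auto).
  destruct Ia as [Ia Ip].
  destruct (step_pr_join _ _ _ _ _ _ _ Ia Ip S Ha1 Hp1) as (c3 & E3 & S3 & Hc & HE).
  destruct (join_D _ _ HL1 _ HL2) as (L3 & X1 & X2). subIH ID.
  destruct (join_D _ _ HR1 _ HR2) as (R3 & Y1 & Y2). subIH ID.
  destruct (Ib _ _ Hb1 Hb2) as (b3 & W1 & W2).
  destruct (join_dm _ _ _ Hm1 Hm2 Imu) as (mu3 & M1 & M2).
  exists (Mtc b3 k (actF c3 mu3) (L3 ++ E3 ++ R3)). split.
  - apply pr_step; auto.
  - apply pr_mtc; auto. apply pr_dm_act; auto. apply pr_D_app; auto. apply pr_D_app; auto.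
Qed.

Lemma H13 b k s b1 mu1 D1 b2 s2 :
  diamond b -> (forall s0 t, Some s = Some s0 -> In (Some t) s0 -> diamond t) ->
  pr b b1 -> pr_dm (Some s) mu1 -> pr_D [] D1 ->
  dom_is k s -> pr b b2 -> pr_os s s2 ->
  exists t3, pr (Mtc b1 k mu1 D1) t3 /\ pr (inst k s2 b2) t3.
Proof.
  intros Ib Imu Hb1 Hm1 HD1 Hd Hb2 Hs2.
  apply pr_D_nil in HD1; subst. apply pr_dm_some_inv in Hm1 as (s1 & -> & Hs1).
  destruct (Ib _ _ Hb1 Hb2) as (b3 & W1 & W2).
  destruct (join_os _ _ Hs1 _ Hs2) as (s3 & M1 & M2). intros; eapply Imu; eauto.
  exists (inst k s3 b3); split.
  - apply pr_res; auto. apply (pr_os_dom k _ _ Hs1); auto.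
  - apply pr_inst; auto.
Qed.

Lemma mtc_diamond b k mu D : diamond b -> (forall s t, mu = Some s -> In (Some t) s -> diamond t) ->
  (forall a p, In (a, p) D -> diamond a /\ diamond p) -> diamond (Mtc b k mu D).
Proof.
  intros Ib Imu ID t1 t2 H1 H2.
  destruct (inv_Mtc _ _ _ _ _ H1) as [(b1&mu1&D1&->&Hb1&Hm1&HD1) | [(b1&mu1&Dl&Dl1&[a p]&Dr&Dr1&c1&E1&HD&->&S1&Hb1&Hm1&HL1&HR1) | [(s&b1&s1&->&->&Hdom&Hb1&Hs1&->) | [(s&->&->&Hdom&->) | (-> & ->)]]]];
  destruct (inv_Mtc _ _ _ _ _ H2) as [(b2&mu2&D2&->&Hb2&Hm2&HD2) | [(b2&mu2&Dl'&Dl2&[a' p']&Dr'&Dr2&c2&E2&HD'&->&S2&Hb2&Hm2&HL2&HR2) | [(s'&b2&s2&E3&E4&Hdom'&Hb2&Hs2&->) | [(s'&E3&E4&Hdom'&->) | (E3 & ->)]]]];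
  subst; try discriminate;
  try match goal with H : _ ++ _ :: _ = [] |- _ => symmetry in H; apply app_cons_not_nil in H; contradiction end;
  try match goal with H : [] = _ ++ _ :: _ |- _ => apply app_cons_not_nil in H; contradiction end;
  try (match goal with H : Some _ = Some _ |- _ => injection H as <- end).
  -
    destruct (Ib _ _ Hb1 Hb2) as (b3 & W1 & W2).
    destruct (join_dm _ _ _ Hm1 Hm2 Imu) as (mu3 & M1 & M2).
    destruct (join_D _ _ HD1 _ HD2 ID) as (D3 & X1 & X2).
    exists (Mtc b3 k mu3 D3); split; apply pr_mtc; auto.
  - eapply H12; eauto.
  - eapply H13; eauto.
  - apply pr_D_nil in HD1; subst. apply pr_dm_some_inv in Hm1 as (s1 & -> & Hs1).
    exists botT; split; [|apply pr_id]. apply pr_res_dom. rewrite <- (pr_os_dom k _ _ Hs1); auto.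
  - apply pr_dm_none_inv in Hm1; subst. exists botT; split; [apply pr_res_bot|apply pr_id].
  - edestruct H12 as (t3 & Z1 & Z2); [| | |apply Hb2|apply Hm2|apply HD2|apply S1|apply Hb1|apply Hm1|apply HL1|apply HR1|]; eauto.
  -
    destruct (app_cons_eq _ _ _ _ _ _ HD') as [(-> & Eq & ->) | [(B & -> & ->) | (B & -> & ->)]].
    + injection Eq as <- <-.
      assert (Ia : diamond a /\ diamond p) by (apply ID; rewrite in_app_iff; simpl; auto).
      destruct Ia as [Ia Ip].
      destruct (step_step_join _ _ _ _ _ _ _ Ia Ip S1 S2) as (c3 & E3 & C1 & C2 & F1 & F2).
      destruct (join_D _ _ HL1 _ HL2) as (L3 & X1 & X2). subIH ID.
      destruct (join_D _ _ HR1 _ HR2) as (R3 & Y1 & Y2). subIH ID.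
      destruct (Ib _ _ Hb1 Hb2) as (b3 & W1 & W2).
      destruct (join_dm _ _ _ Hm1 Hm2 Imu) as (mu3 & M1 & M2).
      exists (Mtc b3 k (actF c3 mu3) (L3 ++ E3 ++ R3)); split; apply pr_mtc; auto;
        try (apply pr_dm_act; auto); repeat apply pr_D_app; auto.
    + eapply diff_pos; eauto.
    + edestruct diff_pos as (t3 & Z1 & Z2);
        [apply Ib|apply Imu| |apply S2|apply Hb2|apply Hm2|apply HL2|apply HR2|apply S1|apply Hb1|apply Hm1|apply HL1|apply HR1|].
      * intros a0 p0 Hin; apply ID. rewrite <- app_assoc; simpl; auto.
      * exists t3; auto.
  - apply pr_dm_none_inv in Hm1; subst. rewrite actF_None.
    exists botT; split; [apply pr_res_bot|apply pr_id].
  - edestruct H13 as (t3 & Z1 & Z2); [| |apply Hb2|apply Hm2|apply HD2|apply Hdom|apply Hb1|apply Hs1|]; eauto.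
  - destruct (Ib _ _ Hb1 Hb2) as (b3 & W1 & W2).
    destruct (join_os _ _ Hs1 _ Hs2) as (s3 & M1 & M2). intros; eapply Imu; eauto.
    exists (inst k s3 b3); split; apply pr_inst; auto.
  - contradiction.
  - apply pr_D_nil in HD2; subst. apply pr_dm_some_inv in Hm2 as (s1 & -> & Hs1).
    exists botT; split; [apply pr_id|]. apply pr_res_dom. rewrite <- (pr_os_dom k _ _ Hs1); auto.
  - contradiction.
  - exists botT; split; apply pr_id.
  - apply pr_dm_none_inv in Hm2; subst. exists botT; split; [apply pr_id|apply pr_res_bot].
  - apply pr_dm_none_inv in Hm2; subst.
    exists botT; split; [apply pr_id|]. rewrite actF_None. apply pr_res_bot.
  - exists botT; split; apply pr_id.
Qed.

Theorem diamond_all : forall t, diamond t.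
Proof.
  induction t using term_ind'; intros u1 u2 H1 H2.
  - apply inv_Var in H1; apply inv_Var in H2; subst; exists (Var i); split; apply pr_id.
  - apply inv_Mat in H1; apply inv_Mat in H2; subst; exists (Mat i); split; apply pr_id.
  - destruct (inv_App _ _ _ H1) as [(x1&y1&->&X1&Y1)|[(k&p&b&p1&b1&a1&->&->&P1&B1&A1)|[(x&v1&->&->&V1)|(s1&s2&s1'&s2'&v1&->&->&S1&S2&V1)]]];
    destruct (inv_App _ _ _ H2) as [(x2&y2&->&X2&Y2)|[(k'&p'&b'&p2&b2&a2&E&->&P2&B2&A2)|[(x'&v2&E&->&V2)|(r1&r2&r1'&r2'&v2&E&->&R1&R2&V2)]]];
    try discriminate.
    + destruct (IHt1 _ _ X1 X2) as (x3&?&?). destruct (IHt2 _ _ Y1 Y2) as (y3&?&?).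
      exists (App x3 y3); split; apply pr_app; auto.
    + subst t1.
      apply inv_Abs in X1 as (p1 & b1 & -> & P1 & B1).
      destruct (IHt1 _ _ (pr_abs _ _ _ _ _ P1 B1) (pr_abs _ _ _ _ _ P2 B2)) as (w & W1 & W2).
      apply inv_Abs in W1 as (p3 & b3 & -> & P3 & B3).
      apply inv_Abs in W2 as (? & ? & E & P4 & B4). injection E as <- <-.
      destruct (IHt2 _ _ Y1 A2) as (y3&?&?).
      exists (Mtc b3 k' (Some []) [(y3, p3)]); split.
      * apply pr_init; auto.
      * apply pr_mtc; auto. apply pr_dm_refl. repeat constructor; auto.
    + subst t1. apply inv_Mat in X1; subst.
      destruct (IHt2 _ _ Y1 V2) as (y3&?&?).
      exists (Dat (Mat x') y3); split; [apply pr_struct_m; auto|apply pr_dat; auto; apply pr_id].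
    + subst t1.
      destruct (IHt1 _ _ X1 (pr_dat _ _ _ _ R1 R2)) as (w & W1 & W2).
      apply inv_Dat in X1 as (q1 & q2 & -> & Q1 & Q2).
      apply inv_Dat in W1 as (z1 & z2 & -> & Z1 & Z2).
      destruct (IHt2 _ _ Y1 V2) as (y3&?&?).
      exists (Dat (Dat z1 z2) y3); split; [apply pr_struct_d; auto|apply pr_dat; auto].
    + apply inv_Abs in X2 as (p2 & b2 & -> & P2 & B2).
      destruct (IHt1 _ _ (pr_abs _ _ _ _ _ P1 B1) (pr_abs _ _ _ _ _ P2 B2)) as (w & W1 & W2).
      apply inv_Abs in W1 as (p3 & b3 & -> & P3 & B3).
      apply inv_Abs in W2 as (? & ? & E & P4 & B4). injection E as <- <-.
      destruct (IHt2 _ _ A1 Y2) as (y3&?&?).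
      exists (Mtc b3 k (Some []) [(y3, p3)]); split.
      * apply pr_mtc; auto. apply pr_dm_refl. repeat constructor; auto.
      * apply pr_init; auto.
    + injection E as <- <- <-.
      destruct (IHt1 _ _ (pr_abs _ _ _ _ _ P1 B1) (pr_abs _ _ _ _ _ P2 B2)) as (w & W1 & W2).
      apply inv_Abs in W1 as (p3 & b3 & -> & P3 & B3).
      apply inv_Abs in W2 as (? & ? & E & P4 & B4). injection E as <- <-.
      destruct (IHt2 _ _ A1 A2) as (y3&?&?).
      exists (Mtc b3 k (Some []) [(y3, p3)]); split; apply pr_mtc; auto; try apply pr_dm_refl;
        repeat constructor; auto.
    + apply inv_Mat in X2; subst.
      destruct (IHt2 _ _ V1 Y2) as (y3&?&?).
      exists (Dat (Mat x) y3); split; [apply pr_dat; auto; apply pr_id|apply pr_struct_m; auto].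
    + injection E as <-.
      destruct (IHt2 _ _ V1 V2) as (y3&?&?).
      exists (Dat (Mat x) y3); split; apply pr_dat; auto; apply pr_id.
    + destruct (IHt1 _ _ (pr_dat _ _ _ _ S1 S2) X2) as (w & W1 & W2).
      apply inv_Dat in X2 as (q1 & q2 & -> & Q1 & Q2).
      apply inv_Dat in W2 as (z1 & z2 & -> & Z1 & Z2).
      destruct (IHt2 _ _ V1 Y2) as (y3&?&?).
      exists (Dat (Dat z1 z2) y3); split; [apply pr_dat; auto|apply pr_struct_d; auto].
    + injection E as <- <-.
      destruct (IHt1 _ _ (pr_dat _ _ _ _ S1 S2) (pr_dat _ _ _ _ R1 R2)) as (w & W1 & W2).
      destruct (IHt2 _ _ V1 V2) as (y3&?&?).
      exists (Dat w y3); split; apply pr_dat; auto.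
  - apply inv_Dat in H1 as (x1&y1&->&X1&Y1); apply inv_Dat in H2 as (x2&y2&->&X2&Y2).
    destruct (IHt1 _ _ X1 X2) as (x3&?&?). destruct (IHt2 _ _ Y1 Y2) as (y3&?&?).
    exists (Dat x3 y3); split; apply pr_dat; auto.
  - apply inv_Abs in H1 as (x1&y1&->&X1&Y1); apply inv_Abs in H2 as (x2&y2&->&X2&Y2).
    destruct (IHt1 _ _ X1 X2) as (x3&?&?). destruct (IHt2 _ _ Y1 Y2) as (y3&?&?).
    exists (Abs k x3 y3); split; apply pr_abs; auto.
  - eapply mtc_diamond; eauto.
Qed.

Theorem lemma3 : forall t t1 t2 : term,
  pr t t1 -> pr t t2 -> exists t3, pr t1 t3 /\ pr t2 t3.
Proof. intros t; apply diamond_all. Qed.
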